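(* Let $\mu$ be an infinite cardinal. Then there is a strong $\mu^+$-system $S = \langle I \times \kappa, \mathcal{R}\rangle$ such that $|\mathcal{R}| = \mu$ and $S$ has no cofinal branch.
   Context: Let $\lambda$ be an infinite regular cardinal. A binary relation $R$ on a set $X$ is tree-like if whenever $a <_R c$ and $b <_R c$, then $a,b$ are $R$-comparable (i.e. $a=b$, $a<_R b$ or $b<_R a$). A $\lambda$-system is $S=\langle\{\{\alpha\}\times\kappa_\alpha\mid\alpha\in I\},\mathcal{R}\rangle$ where: $I\subseteq\lambda$ is unbounded and $0<\kappa_\alpha<\lambda$ for $\alpha\in I$ (the $\alpha$-th level is $S_\alpha=\{\alpha\}\times\kappa_\alpha$, and $S$ also denotes the union of the levels); $\mathcal{R}$ is a set of binary, transitive, tree-like relations on $S$ with $|\mathcal{R}|<\lambda$; for all $R\in\mathcal{R}$, if $(\alpha_0,\beta_0)<_R(\alpha_1,\beta_1)$ then $\alpha_0<\alpha_1$; and for all $\alpha_0<\alpha_1$ in $I$ there are $\beta_0<\kappa_{\alpha_0}$, $\beta_1<\kappa_{\alpha_1}$, $R\in\mathcal{R}$ with $(\alpha_0,\beta_0)<_R(\alpha_1,\beta_1)$. It is a strong $\lambda$-system if moreover for all $\alpha_0<\alpha_1$ in $I$ and every $\beta_1<\kappa_{\alpha_1}$ there are $\beta_0<\kappa_{\alpha_0}$ and $R\in\mathcal{R}$ with $(\alpha_0,\beta_0)<_R(\alpha_1,\beta_1)$. $\langle I\times\kappa,\mathcal{R}\rangle$ denotes a system with $\kappa_\alpha=\kappa$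 for all $\alpha\in I$. A branch of $S$ through $R\in\mathcal{R}$ is a set $b\subseteq S$ any two elements of which are $R$-comparable; it is cofinal if $b\cap S_\alpha\neq\emptyset$ for unboundedly many $\alpha\in I$. $S$ has a cofinal branch if it has a cofinal branch through some $R\in\mathcal{R}$. *)

(* Defs.v *)
From Stdlib Require Import Relations.

Definition inj_into (A B : Type) : Prop := exists f : A -> B, forall x y, f x = f y -> x = y.

Definition infinite_type (M : Type) : Prop := inj_into nat M.

Definition strict_well_order {L : Type} (lt : L -> L -> Prop) : Prop :=
  (forall x, ~ lt x x) /\
  (forall x y z, lt x y -> lt y z -> lt x z) /\
  (forall x y, x = y \/ lt x y \/ lt y x) /\
  well_founded lt.

Definition le_of {L : Type} (lt : L -> L -> Prop) (x y : L) : Prop := x = y \/ lt x y.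

Definition seg {L : Type} (lt : L -> L -> Prop) (a : L) : Type := {b : L | lt b a}.

(* (L, lt) is (order-isomorphic to) the ordinal mu^+, where mu = |M|:
   a well-order of cardinality > mu all of whose proper initial segments
   have cardinality <= mu. *)
Definition is_successor_of {L : Type} (lt : L -> L -> Prop) (M : Type) : Prop :=
  strict_well_order lt /\ ~ inj_into L M /\ (forall a : L, inj_into (seg lt a) M).

Definition is_cardinal_in {L : Type} (lt : L -> L -> Prop) (k : L) : Prop :=
  forall j, lt j k -> ~ inj_into (seg lt k) (seg lt j).

(* Nodes are pairs (alpha, beta) : L * L; S = I x kappa. *)
Definition in_system {L : Type} (lt : L -> L -> Prop) (I : L -> Prop) (k : L) (x : L * L) : Prop :=
  I (fst x) /\ lt (snd x) k.

(* A strong lambda-system <I x kappa, R> (lambda = (L,lt)), with the relations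
   indexed by an index type Idx (R : Idx -> relation on S). *)
Definition strong_system {L Idx : Type} (lt : L -> L -> Prop)
    (I : L -> Prop) (k : L) (R : Idx -> L * L -> L * L -> Prop) : Prop :=
  (forall a, exists b, I b /\ le_of lt a b) /\
  (exists b, lt b k) /\ is_cardinal_in lt k /\
  (forall r x y, R r x y -> in_system lt I k x /\ in_system lt I k y) /\
  (forall r x y z, R r x y -> R r y z -> R r x z) /\
  (forall r a b c, R r a c -> R r b c -> a = b \/ R r a b \/ R r b a) /\
  (forall r x y, R r x y -> lt (fst x) (fst y)) /\
  (forall a0 a1, I a0 -> I a1 -> lt a0 a1 ->
     exists b0 b1 r, lt b0 k /\ lt b1 k /\ R r (a0, b0) (a1, b1)) /\
  (forall a0 a1 b1, I a0 -> I a1 -> lt a0 a1 -> lt b1 k ->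
     exists b0 r, lt b0 k /\ R r (a0, b0) (a1, b1)).

Definition has_cofinal_branch {L Idx : Type} (lt : L -> L -> Prop)
    (I : L -> Prop) (k : L) (R : Idx -> L * L -> L * L -> Prop) : Prop :=
  exists (r : Idx) (b : L * L -> Prop),
    (forall x, b x -> in_system lt I k x) /\
    (forall x y, b x -> b y -> x = y \/ R r x y \/ R r y x) /\
    (forall a, exists al be, le_of lt a al /\ b (al, be)).

(* Main.v *)
Require Import Defs.
From Stdlib Require Import ClassicalEpsilon FunctionalExtensionality PropExtensionality Classical Lia Arith Cantor.

Section Ord.
Variables (L : Type) (lt : L -> L -> Prop) (Hwo : strict_well_order lt).

Lemma wo_irr x : ~ lt x x. Proof. apply (proj1 Hwo). Qed.
Lemma wo_trans x y z : lt x y -> lt y z -> lt x z. Proof. apply (proj1 (proj2 Hwo)). Qed.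
Lemma wo_tri x y : x = y \/ lt x y \/ lt y x. Proof. apply (proj1 (proj2 (proj2 Hwo))). Qed.
Lemma wo_wf : well_founded lt. Proof. apply (proj2 (proj2 (proj2 Hwo))). Qed.
Lemma wo_asym x y : lt x y -> ~ lt y x.
Proof. intros H1 H2. apply (wo_irr x). eapply wo_trans; eauto. Qed.

Lemma wo_min (P : L -> Prop) : (exists x, P x) -> exists x, P x /\ forall y, P y -> ~ lt y x.
Proof.
  intros [x Px]. revert Px. induction x as [x IH] using (well_founded_ind wo_wf). intro Px.
  destruct (classic (exists y, P y /\ lt y x)) as [[y [Py Hy]]|N].
  - apply (IH y Hy Py).
  - exists x; split; auto. intros y Py Hy; apply N; eauto.
Qed.

Lemma rec_lemma (A W : Type) (a0 : A) (F : (A -> Prop) -> A -> Prop) (w : A -> W) :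
  (forall S x y, F S x -> S y -> w x <> w y) -> ~ inj_into L W ->
  exists (h : L -> A) (b : L),
    (forall a, lt a b -> F (fun y => exists c, lt c a /\ h c = y) (h a)) /\
    ~ exists x, F (fun y => exists c, lt c b /\ h c = y) x.
Proof.
  intros Hfresh Hnot.
  set (step := fun (b : L) (rec : forall c, lt c b -> A) =>
    epsilon (inhabits a0) (fun x => F (fun y => exists c (H : lt c b), rec c H = y) x)).
  set (h := Fix wo_wf (fun _ => A) step).
  assert (Heq : forall b, h b = epsilon (inhabits a0)
     (fun x => F (fun y => exists c, lt c b /\ h c = y) x)).
  { intro b. unfold h. rewrite Fix_eq.
    - unfold step. f_equal. apply functional_extensionality; intro x. f_equal.
      apply functional_extensionality; intro y. apply propositional_extensionality.
      split; [intros [c [H E]]; eauto | intros [c [H E]]; eauto].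
    - intros x f g Hfg. assert (f = g) as ->; auto.
      apply functional_extensionality_dep; intro y.
      apply functional_extensionality_dep; intro p. auto. }
  set (img := fun b => fun y => exists c, lt c b /\ h c = y).
  destruct (classic (exists b, ~ exists x, F (img b) x)) as [Hex|Hall].
  - destruct (wo_min _ Hex) as [b [Hb Hmin]].
    exists h, b. split; [|exact Hb].
    intros a Ha. rewrite (Heq a). apply epsilon_spec.
    apply NNPP. intro N. apply (Hmin a); auto.
  - exfalso. apply Hnot.
    assert (Hh : forall b, F (img b) (h b)).
    { intro b. unfold img. rewrite (Heq b). apply epsilon_spec.
      apply NNPP. intro N. apply Hall. exists b. exact N. }
    exists (fun a => w (h a)). intros x y E.
    destruct (wo_tri x y) as [|[H|H]]; auto.
    + exfalso. apply (Hfresh _ _ _ (Hh y) (ex_intro _ x (conj H eq_refl))). auto.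
    + exfalso. apply (Hfresh _ _ _ (Hh x) (ex_intro _ y (conj H eq_refl))). auto.
Qed.


Lemma M_into_L (M : Type) (m0 : M) : ~ inj_into L M -> exists g : M -> L, forall x y, g x = g y -> x = y.
Proof.
  intro HnL.
  destruct (rec_lemma M M m0 (fun S x => ~ S x) (fun x => x)) as [h [b [_ Hb]]]; auto.
  { intros S x y Hx Hy E. subst. auto. }
  assert (Hc : forall x, exists c, lt c b /\ h c = x).
  { intro x. apply NNPP. intro N. apply Hb. exists x. exact N. }
  exists (fun x => epsilon (inhabits b) (fun c => h c = x)).
  intros x y E.
  assert (Sx : h (epsilon (inhabits b) (fun c => h c = x)) = x).
  { apply (epsilon_spec (inhabits b) (fun c => h c = x)). destruct (Hc x) as [c [_ ?]]; eauto. }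
  assert (Sy : h (epsilon (inhabits b) (fun c => h c = y)) = y).
  { apply (epsilon_spec (inhabits b) (fun c => h c = y)). destruct (Hc y) as [c [_ ?]]; eauto. }
  rewrite <- Sx, <- Sy, E. reflexivity.
Qed.

Lemma wo_bottom (x0 : L) : exists z, forall y, ~ lt y z.
Proof. destruct (wo_min (fun _ => True)) as [z [_ Hz]]; eauto. Qed.

End Ord.

Lemma nat_swo : strict_well_order Peano.lt.
Proof.
  split; [intros; lia|]. split; [intros; lia|]. split; [intros; lia|]. exact Wf_nat.lt_wf.
Qed.

Lemma dfin (M : Type) (C : M -> Prop) : ~ inj_into nat {x | C x} ->
  exists cC : M -> nat, forall x y, C x -> C y -> cC x = cC y -> x = y.
Proof.
  intro Hn.
  destruct (classic (exists x, C x)) as [[x0 H0]|N].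
  2:{ exists (fun _ => 0). intros x y Hx; exfalso; eauto. }
  destruct (rec_lemma nat Peano.lt nat_swo {x | C x} {x | C x} (exist _ x0 H0)
             (fun S x => ~ S x) (fun x => x)) as [h [b [_ Hb]]]; auto.
  { intros S x y Hx Hy E. subst. auto. }
  assert (Hc : forall x, exists c, c < b /\ h c = x).
  { intro x. apply NNPP. intro N. apply Hb. exists x. exact N. }
  exists (fun m => epsilon (inhabits 0) (fun j => proj1_sig (h j) = m)).
  assert (Sp : forall m, C m -> proj1_sig (h (epsilon (inhabits 0) (fun j => proj1_sig (h j) = m))) = m).
  { intros m Hm. apply (epsilon_spec (inhabits 0) (fun j => proj1_sig (h j) = m)).
    destruct (Hc (exist _ m Hm)) as [c [_ E]]. exists c. rewrite E. reflexivity. }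
  intros x y Hx Hy E. rewrite <- (Sp x Hx), <- (Sp y Hy), E. reflexivity.
Qed.

Lemma to_nat_inj p q : to_nat p = to_nat q -> p = q.
Proof. intro E. rewrite <- (cancel_of_to p), <- (cancel_of_to q), E. reflexivity. Qed.

Lemma natM (L : Type) (lt : L -> L -> Prop) (Hwo : strict_well_order lt) (M : Type) :
  ~ inj_into L M -> inj_into nat M -> inj_into (nat * M) M.
Proof.
  intros HnL [f Hf].
  destruct (rec_lemma L lt Hwo (nat -> M) M f
     (fun S g => (forall i j, g i = g j -> i = j) /\ (forall g' i j, S g' -> g i <> g' j))
     (fun g => g 0)) as [h [b [Hb Hnb]]]; auto.
  { intros S x y [_ Hx] Hy. apply Hx. exact Hy. }
  destruct (wo_bottom L lt Hwo b) as [z Hz].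
  assert (Hzb : lt z b).
  { destruct (wo_tri L lt Hwo z b) as [E|[H|H]]; auto.
    - subst. exfalso. apply Hnb. exists f. split; auto. intros g' i j [c [Hc _]]. exfalso; eapply Hz; eauto.
    - exfalso; eapply Hz; eauto. }
  assert (Hdisj : forall a a' i j, lt a b -> lt a' b -> h a i = h a' j -> a = a').
  { intros a a' i j Ha Ha' E.
    destruct (wo_tri L lt Hwo a a') as [|[H|H]]; auto; exfalso.
    - destruct (Hb a' Ha') as [_ Hd]. apply (Hd (h a) j i); eauto.
    - destruct (Hb a Ha) as [_ Hd]. apply (Hd (h a') i j); eauto. }
  set (C := fun m => ~ exists a i, lt a b /\ h a i = m).
  destruct (dfin M C) as [cC HcC].
  { intros [u Hu]. apply Hnb. exists (fun n => proj1_sig (u n)). split.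
    - intros i j E. apply Hu. destruct (u i), (u j). simpl in E. subst.
      f_equal. apply proof_irrelevance.
    - intros g' i j [c [Hc E]] E'. subst g'. destruct (u i) as [m Hm]. simpl in E'.
      apply Hm. exists c, j. auto. }
  set (pick := fun m => epsilon (inhabits (z, 0)) (fun q => lt (fst q) b /\ h (fst q) (snd q) = m)).
  assert (Hpick : forall m, ~ C m -> lt (fst (pick m)) b /\ h (fst (pick m)) (snd (pick m)) = m).
  { intros m Hm. apply (epsilon_spec (inhabits (z,0)) (fun q => lt (fst q) b /\ h (fst q) (snd q) = m)).
    apply NNPP. intro N. apply Hm. intros [a [i [H1 H2]]]. apply N. exists (a, i). auto. }
  exists (fun p : nat * M => let (n, m) := p in
    if excluded_middle_informative (C m) then h z (2 * to_nat (n, cC m) + 1)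
    else h (fst (pick m)) (2 * to_nat (n, snd (pick m)))).
  intros [n m] [n' m'].
  destruct (excluded_middle_informative (C m)) as [Cm|Cm];
  destruct (excluded_middle_informative (C m')) as [Cm'|Cm']; intro E.
  - apply (proj1 (Hb z Hzb)) in E.
    assert (E2 : to_nat (n, cC m) = to_nat (n', cC m')) by lia.
    apply to_nat_inj in E2. injection E2 as -> E3. f_equal. apply HcC; auto.
  - destruct (Hpick m' Cm') as [H1 _].
    assert (Ez := Hdisj _ _ _ _ Hzb H1 E). rewrite <- Ez in E.
    apply (proj1 (Hb z Hzb)) in E. lia.
  - destruct (Hpick m Cm) as [H1 _].
    assert (Ez := Hdisj _ _ _ _ H1 Hzb E). rewrite Ez in E.
    apply (proj1 (Hb z Hzb)) in E. lia.
  - destruct (Hpick m Cm) as [H1 H2]. destruct (Hpick m' Cm') as [H1' H2'].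
    assert (Ea := Hdisj _ _ _ _ H1 H1' E). rewrite <- Ea in E.
    apply (proj1 (Hb _ H1)) in E.
    assert (E2 : to_nat (n, snd (pick m)) = to_nat (n', snd (pick m'))) by lia.
    apply to_nat_inj in E2. injection E2 as -> E3.
    rewrite <- H2, <- H2', Ea, E3. reflexivity.
Qed.

Fixpoint Tn {L : Type} (D : L -> L -> Prop) (n : nat) (x y : L) : Prop :=
  match n with 0 => x = y | S n => exists w, Tn D n x w /\ D w y end.

Section Forest.
Variables (L : Type) (lt : L -> L -> Prop) (Hwo : strict_well_order lt) (D : L -> L -> Prop).
Hypothesis Hlt : forall w y, D w y -> lt w y.
Hypothesis Hup : forall w w' y, D w y -> D w' y -> w = w'.

Lemma Tn_le n x y : Tn D n x y -> x = y \/ lt x y.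
Proof.
  revert y; induction n as [|n IH]; simpl; intros y H; auto.
  destruct H as [w [H1 H2]]. right. destruct (IH w H1) as [->|H]; auto.
  eapply wo_trans; eauto.
Qed.

Lemma Tn_lt n x y : Tn D (S n) x y -> lt x y.
Proof.
  simpl. intros [w [H1 H2]]. destruct (Tn_le n x w H1) as [->|H]; auto. eapply wo_trans; eauto.
Qed.

Lemma Tn_add m n x y u : Tn D n x y -> Tn D m y u -> Tn D (m + n) x u.
Proof.
  revert u; induction m as [|m IH]; simpl; intros u H1 H2.
  - subst; auto.
  - destruct H2 as [w [H2 H3]]. exists w; split; auto.
Qed.

Lemma Tn_len n m x y : Tn D n x y -> Tn D m x y -> n = m.
Proof.
  revert m y; induction n as [|n IH]; intros [|m] y H1 H2; auto.
  - simpl in H1; subst. apply Tn_lt in H2. exfalso; eapply wo_irr; eauto.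
  - simpl in H2; subst. apply Tn_lt in H1. exfalso; eapply wo_irr; eauto.
  - destruct H1 as [w [H1 H1']]. destruct H2 as [w' [H2 H2']].
    assert (w = w') as <- by (eapply Hup; eauto). f_equal. eauto.
Qed.

Lemma Tn_back n m a b c : Tn D n a c -> Tn D m b c -> n <= m -> Tn D (m - n) b a.
Proof.
  revert m c; induction n as [|n IH]; intros m c H1 H2 Hle.
  - simpl in H1; subst. rewrite Nat.sub_0_r. auto.
  - destruct m as [|m]; [lia|].
    destruct H1 as [w [H1 H1']]. destruct H2 as [w' [H2 H2']].
    assert (w = w') as <- by (eapply Hup; eauto). simpl. apply (IH m w); auto. lia.
Qed.

Definition Tr x y := exists n, Tn D (S n) x y.

Lemma Tr_trans x y u : Tr x y -> Tr y u -> Tr x u.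
Proof.
  intros [n H1] [m H2]. exists (m + S n). apply (Tn_add (S m) (S n) x y u); auto.
Qed.

Lemma Tr_tree a b c : Tr a c -> Tr b c -> a = b \/ Tr a b \/ Tr b a.
Proof.
  intros [n H1] [m H2].
  destruct (le_lt_dec (S n) (S m)) as [Hl|Hl].
  - pose proof (Tn_back _ _ _ _ _ H1 H2 Hl) as H.
    destruct (S m - S n) as [|p] eqn:Ep.
    + simpl in H. auto.
    + right; right. exists p. auto.
  - assert (Hl' : S m <= S n) by lia.
    pose proof (Tn_back _ _ _ _ _ H2 H1 Hl') as H.
    destruct (S n - S m) as [|p] eqn:Ep.
    + simpl in H. auto.
    + right; left. exists p. auto.
Qed.

End Forest.

Definition sw {M : Type} (u v x : M) : M :=
  if excluded_middle_informative (x = u) then v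
  else if excluded_middle_informative (x = v) then u else x.

Lemma sw_inj {M : Type} (u v x y : M) : sw u v x = sw u v y -> x = y.
Proof.
  unfold sw.
  destruct (excluded_middle_informative (x = u)); destruct (excluded_middle_informative (y = u));
  destruct (excluded_middle_informative (x = v)); destruct (excluded_middle_informative (y = v));
  intros; subst; congruence.
Qed.

Lemma sw_u {M : Type} (u v : M) : sw u v u = v.
Proof. unfold sw. destruct (excluded_middle_informative (u = u)); congruence. Qed.

Theorem mainTheorem3 (M : Type) (L : Type) (lt : L -> L -> Prop) :
  infinite_type M -> is_successor_of lt M ->
  exists (I : L -> Prop) (k : L) (R : M -> L * L -> L * L -> Prop),
    (forall r s, R r = R s -> r = s) /\
    strong_system lt I k R /\
    ~ has_cofinal_branch lt I k R.
Proof.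
  intros [f Hf] [Hwo [HnL Hseg]].
  set (m0 := f 0).
  assert (Hx0 : exists x0 : L, True).
  { apply NNPP. intro N. apply HnL. exists (fun _ => m0). intros x; exfalso; eauto. }
  destruct Hx0 as [x0 _].
  destruct (wo_bottom L lt Hwo x0) as [z Hz].
  set (E0 := fun b => epsilon (inhabits (fun _ : L => m0))
         (fun e : L -> M => forall x y, lt x b -> lt y b -> e x = e y -> x = y)).
  assert (HE0 : forall b x y, lt x b -> lt y b -> E0 b x = E0 b y -> x = y).
  { intro b. unfold E0. apply (epsilon_spec (inhabits (fun _ : L => m0))
         (fun e : L -> M => forall x y, lt x b -> lt y b -> e x = e y -> x = y)).
    destruct (Hseg b) as [e He].
    exists (fun x => match excluded_middle_informative (lt x b) with
                     | left H => e (exist _ x H) | right _ => m0 end).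
    intros x y Hx Hy.
    destruct (excluded_middle_informative (lt x b)) as [H1|]; [|contradiction].
    destruct (excluded_middle_informative (lt y b)) as [H2|]; [|contradiction].
    intro E. apply He in E. injection E. auto. }
  assert (Hnomax : forall x, exists y, lt x y).
  { intro x. apply NNPP. intro N. apply HnL.
    set (s := fun m : M => if excluded_middle_informative (exists n, m = f n)
               then f (S (epsilon (inhabits 0) (fun n => m = f n))) else m).
    assert (Hs1 : forall m, (exists n, m = f n) -> m = f (epsilon (inhabits 0) (fun n => m = f n))).
    { intros m Hm. apply (epsilon_spec (inhabits 0) (fun n => m = f n)). auto. }
    assert (Hs0 : forall m, s m <> f 0).
    { intros m. unfold s. destruct (excluded_middle_informative (exists n, m = f n)) as [H|H].
      - intro E. apply Hf in E. discriminate.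
      - intro E. apply H. eauto. }
    assert (Hsi : forall m m', s m = s m' -> m = m').
    { intros m m'. unfold s.
      destruct (excluded_middle_informative (exists n, m = f n)) as [H|H];
      destruct (excluded_middle_informative (exists n, m' = f n)) as [H'|H']; intro E.
      - apply Hf in E. injection E as E. rewrite (Hs1 m H), (Hs1 m' H'), E. reflexivity.
      - exfalso. apply H'. eauto.
      - exfalso. apply H. eauto.
      - auto. }
    exists (fun y => if excluded_middle_informative (y = x) then f 0 else s (E0 x y)).
    intros y y'.
    destruct (excluded_middle_informative (y = x)) as [Hy|Hy];
    destruct (excluded_middle_informative (y' = x)) as [Hy'|Hy']; intro E.
    - congruence.
    - exfalso. symmetry in E. eapply Hs0; eauto.
    - exfalso. eapply Hs0; eauto.
    - apply Hsi in E.
      assert (Hlt : forall w, w <> x -> lt w x).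
      { intros w Hw. destruct (wo_tri L lt Hwo w x) as [|[|H]]; try tauto.
        exfalso; apply N; eauto. }
      apply (HE0 x); auto. }
  set (succ := fun x => epsilon (inhabits x) (fun y => lt x y /\ forall w, lt x w -> ~ lt w y)).
  assert (Hsucc : forall x, lt x (succ x) /\ forall w, lt x w -> ~ lt w (succ x)).
  { intro x. apply (epsilon_spec (inhabits x) (fun y => lt x y /\ forall w, lt x w -> ~ lt w y)).
    destruct (wo_min L lt Hwo (fun y => lt x y) (Hnomax x)) as [y [H1 H2]]. eauto. }
  assert (Hsucc_le : forall x w, lt x w -> w = succ x \/ lt (succ x) w).
  { intros x w H. destruct (wo_tri L lt Hwo w (succ x)) as [|[H'|]]; auto.
    exfalso. eapply (proj2 (Hsucc x)); eauto. }
  destruct (M_into_L L lt Hwo M m0 HnL) as [g Hg].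
  set (tau := fun m => succ (g m)).
  assert (Hztau : forall m, lt z (tau m)).
  { intro m. unfold tau. destruct (wo_tri L lt Hwo z (g m)) as [E|[H|H]].
    - rewrite E. apply Hsucc.
    - eapply wo_trans; eauto. apply Hsucc.
    - exfalso; eapply Hz; eauto. }
  assert (Htau : forall m m', tau m = tau m' -> m = m').
  { intros m m' E. apply Hg. unfold tau in E.
    assert (Hmono : forall x y, lt x y -> lt (succ x) (succ y)).
    { intros x y H. destruct (Hsucc_le _ _ H) as [E'|E'].
      - rewrite <- E'. apply Hsucc.
      - eapply wo_trans; eauto. apply Hsucc. }
    destruct (wo_tri L lt Hwo (g m) (g m')) as [|[H|H]]; auto; exfalso.
    - apply Hmono in H. rewrite E in H. eapply wo_irr; eauto.
    - apply Hmono in H. rewrite E in H. eapply wo_irr; eauto. }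
  set (rho := fun b => epsilon (inhabits m0) (fun m => tau m = b)).
  assert (Hrho : forall m, rho (tau m) = m).
  { intro m. apply Htau. apply (epsilon_spec (inhabits m0) (fun m' => tau m' = tau m)). eauto. }
  set (E := fun b x => sw (E0 b z) (rho b) (E0 b x)).
  assert (HE : forall b x y, lt x b -> lt y b -> E b x = E b y -> x = y).
  { intros b x y Hx Hy H. apply sw_inj in H. eauto. }
  assert (HEtau : forall m, E (tau m) z = m).
  { intro m. unfold E. rewrite sw_u. apply Hrho. }
  set (D := fun r a b => lt a b /\ E b a = r).
  assert (HDlt : forall r w y, D r w y -> lt w y) by (intros r w y [H _]; auto).
  assert (HDup : forall r w w' y, D r w y -> D r w' y -> w = w').
  { intros r w w' y [H1 H2] [H1' H2']. apply (HE y); congruence. }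
  set (k := succ z).
  assert (Hk : forall b, lt b k <-> b = z).
  { intro b. split.
    - intro H. destruct (wo_tri L lt Hwo b z) as [|[H'|H']]; auto; exfalso.
      + eapply Hz; eauto.
      + eapply (proj2 (Hsucc z)); eauto.
    - intros ->. apply Hsucc. }
  set (R := fun r (x y : L * L) => snd x = z /\ snd y = z /\ Tr L (D r) (fst x) (fst y)).
  exists (fun _ => True), k, R.
  split; [|split].
  -
    intros r s Hrs.
    assert (H1 : R r (z, z) (tau r, z)).
    { repeat split; auto. exists 0. simpl. exists z. split; auto. split; auto. }
    rewrite Hrs in H1. destruct H1 as [_ [_ [n Hn]]]. simpl in Hn.
    destruct Hn as [w [Hw1 Hw2]].
    assert (H2 : R s (w, z) (tau r, z)).
    { repeat split; auto. exists 0. simpl. exists w. split; auto. }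
    rewrite <- Hrs in H2. destruct H2 as [_ [_ [n' Hn']]]. simpl in Hn'.
    destruct Hn' as [w' [Hw1' Hw2']].
    assert (w' = z) as ->.
    { eapply HDup; eauto. split; auto. }
    destruct (Tn_le L lt Hwo (D r) (HDlt r) n' w z Hw1') as [->|Hc].
    + destruct Hw2 as [_ Hw2]. rewrite <- Hw2. auto.
    + exfalso; eapply Hz; eauto.
  -
    split; [intro a; exists a; split; [exact I| left; auto]|].
    split; [exists z; apply Hk; auto|].
    split.
    { intros j Hj [F HF]. apply Hk in Hj. subst j.
      destruct (F (exist _ z (proj2 (Hk z) eq_refl))) as [c Hc]. eapply Hz; eauto. }
    split.
    { intros r x y [H1 [H2 _]]. split; split; auto; apply Hk; auto. }
    split.
    { intros r x y u [H1 [H2 H3]] [_ [H4 H5]]. repeat split; auto.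
      eapply Tr_trans; eauto. }
    split.
    { intros r [a1 a2] [b1 b2] c [H1 [H2 H3]] [H1' [_ H3']]. simpl in *. subst.
      destruct (Tr_tree L (D r) (HDup r) _ _ _ H3 H3') as [->|[H|H]].
      - auto.
      - right; left. repeat split; auto.
      - right; right. repeat split; auto. }
    split.
    { intros r x y [_ [_ [n H]]]. exact (Tn_lt L lt Hwo (D r) (HDlt r) n _ _ H). }
    split.
    { intros a0 a1 _ _ H. exists z, z, (E a1 a0).
      split; [apply Hk; auto|]. split; [apply Hk; auto|].
      repeat split; auto. exists 0. simpl. exists a0. split; auto. split; auto. }
    { intros a0 a1 b1 _ _ H Hb1. apply Hk in Hb1. subst b1. exists z, (E a1 a0).
      split; [apply Hk; auto|].
      repeat split; auto. exists 0. simpl. exists a0. split; auto. split; auto. }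
  -
    intros [r [b [Hin [Hcomp Hunb]]]].
    set (B := fun y => b (y, z)).
    assert (Hsnd : forall x, b x -> snd x = z).
    { intros x Hx. apply Hk. apply Hin. auto. }
    assert (Hunb' : forall a, exists y, B y /\ le_of lt a y).
    { intro a. destruct (Hunb a) as [al [be [H1 H2]]].
      pose proof (Hsnd _ H2) as Hs. simpl in Hs. subst be. eauto. }
    destruct (Hunb' z) as [a0 [Ha0 _]].
    assert (Habove : forall a, exists y, B y /\ lt a0 y /\ lt a y).
    { intro a.
      assert (Hm : exists m, le_of lt a m /\ le_of lt a0 m).
      { destruct (wo_tri L lt Hwo a a0) as [->|[H|H]].
        - exists a0; split; left; auto.
        - exists a0; split; [right|left]; auto.
        - exists a; split; [left|right]; auto. }
      destruct Hm as [m [Hm1 Hm2]].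
      destruct (Hunb' (succ m)) as [y [Hy Hy']].
      assert (Hmy : lt m y).
      { destruct Hy' as [<-|Hy']. apply Hsucc. eapply wo_trans; eauto. apply Hsucc. }
      exists y. split; auto.
      split; [destruct Hm2 as [<-|Hm2]|destruct Hm1 as [<-|Hm1]]; auto; eapply wo_trans; eauto. }
    assert (HcompB : forall y y', B y -> B y' -> y = y' \/ Tr L (D r) y y' \/ Tr L (D r) y' y).
    { intros y y' Hy Hy'. destruct (Hcomp _ _ Hy Hy') as [E'|[[_ [_ H]]|[_ [_ H]]]].
      - injection E'; auto.
      - auto.
      - auto. }
    assert (Hdep : forall y, B y -> lt a0 y -> exists n, Tn (D r) n a0 y).
    { intros y Hy Hl. destruct (HcompB a0 y Ha0 Hy) as [<-|[[n H]|[n H]]].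
      - exfalso; eapply wo_irr; eauto.
      - eauto.
      - exfalso. pose proof (Tn_lt L lt Hwo (D r) (HDlt r) n _ _ H) as H0. eapply (wo_asym L lt Hwo); eauto. }
    set (yf := fun a => epsilon (inhabits a0) (fun y => B y /\ lt a0 y /\ lt a y)).
    assert (Hyf : forall a, B (yf a) /\ lt a0 (yf a) /\ lt a (yf a)).
    { intro a. apply (epsilon_spec (inhabits a0) (fun y => B y /\ lt a0 y /\ lt a y)). auto. }
    set (dep := fun y => epsilon (inhabits 0) (fun n => Tn (D r) n a0 y)).
    assert (Hdp : forall a, Tn (D r) (dep (yf a)) a0 (yf a)).
    { intro a. apply (epsilon_spec (inhabits 0) (fun n => Tn (D r) n a0 (yf a))).
      destruct (Hyf a) as [H1 [H2 _]]. auto. }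
    destruct (natM L lt Hwo M HnL (ex_intro _ f Hf)) as [P HP].
    apply HnL. exists (fun a => P (dep (yf a), E (yf a) a)).
    intros a a' Heq. apply HP in Heq. injection Heq as Hd He.
    destruct (Hyf a) as [Hy1 [_ Hy3]]. destruct (Hyf a') as [Hy1' [_ Hy3']].
    destruct (HcompB _ _ Hy1 Hy1') as [Ey|[[p H]|[p H]]].
    + rewrite <- Ey in He, Hy3'. apply (HE (yf a)); auto.
    + exfalso. pose proof (Tn_add L (D r) (S p) _ _ _ _ (Hdp a) H) as H'.
      pose proof (Tn_len L lt Hwo (D r) (HDlt r) (HDup r) _ _ _ _ H' (Hdp a')). lia.
    + exfalso. pose proof (Tn_add L (D r) (S p) _ _ _ _ (Hdp a') H) as H'.
      pose proof (Tn_len L lt Hwo (D r) (HDlt r) (HDup r) _ _ _ _ H' (Hdp a)). lia.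
Qed.
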